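(* Let $V$ be a $\mathcal{T}$-module which is free of rank $1$ as a $\mathcal{U}(\mathfrak{h})$-module, $\mathfrak{h}=\mathbb{C}L_0\oplus\mathbb{C}G_0$, with an even free generator $\mathbf{1}$, so that $V_{\bar0}=\mathbb{C}[L_0]\mathbf{1}$ and $V_{\bar1}=G_0\mathbb{C}[L_0]\mathbf{1}$. Write $f(\partial^2)\mathbf{1}:=f(L_0)\mathbf{1}$ and $\partial f(\partial^2)\mathbf{1}:=G_0f(L_0)\mathbf{1}$ for polynomials $f$ (note $G_0^2=L_0$). Let $\lambda\in\mathbb{C}^*$, $\alpha\in\mathbb{C}$ be such that $L_mf(\partial^2)\mathbf{1}=\lambda^m(\partial^2+m\alpha)f(\partial^2+m)\mathbf{1}$ for all $m\in\mathbb{Z}$ and all polynomials $f$. Then one of the following holds: (a) for all $r\in\frac12+\mathbb{Z}$ and $p\in\frac12\mathbb{Z}$: $G_p\mathbf{1}=\lambda^p\partial\mathbf{1}$, $G_r\partial\mathbf{1}=-\lambda^r(\partial^2+2r\alpha)\mathbf{1}$, $I_r\mathbf{1}=-2\lambda^r\alpha\mathbf{1}$; (b) for all $r\in\frac12+\mathbb{Z}$ and $p\in\frac12\mathbb{Z}$: $G_p\mathbf{1}=(-1)^{2p}\lambda^p\partial\mathbf{1}$, $G_r\partial\mathbf{1}=\lambda^r(\partial^2+2r\alpha)\mathbf{1}$, $I_r\mathbf{1}=2\lambda^r\alpha\mathbf{1}$.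
   Context: The twisted $N=2$ superconformal algebra $\mathcal{T}$ is the Lie superalgebra over $\mathbb{C}$ with basis $\{L_m, I_r, G_p\mid m\in\mathbb{Z}, r\in\frac12+\mathbb{Z}, p\in\frac12\mathbb{Z}\}$, even part spanned by the $L_m,I_r$, odd part by the $G_p$, only nonzero brackets $[L_m,L_n]=(m-n)L_{m+n}$, $[L_m,I_r]=-rI_{m+r}$, $[L_m,G_p]=(\frac m2-p)G_{m+p}$, $[I_r,G_p]=G_{r+p}$, $[G_p,G_q]=(-1)^{2p}2L_{p+q}$ if $p+q\in\mathbb{Z}$, $[G_p,G_q]=(-1)^{2p+1}(p-q)I_{p+q}$ if $p+q\in\frac12+\mathbb{Z}$. A $\mathcal{T}$-module is a $\mathbb{Z}_2$-graded space with $\mathcal{T}_{\bar i}V_{\bar j}\subseteq V_{\bar i+\bar j}$ and $x(yv)-(-1)^{|x||y|}y(xv)=[x,y]v$. For $p\in\frac12\mathbb{Z}$, $\lambda^p$ means $(\lambda^{1/2})^{2p}$ for a fixed square root $\lambda^{1/2}$. *)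

(* Defs.v *)
From HB Require Import structures.
From mathcomp Require Import all_boot all_order all_algebra.
From mathcomp Require Import reals complex.
Set Implicit Arguments. Unset Strict Implicit. Unset Printing Implicit Defensive.
Import Order.TTheory GRing.Theory Num.Theory.
Local Open Scope ring_scope.

(* Index conventions: an index p in (1/2)Z is encoded by the integer 2p.
   L m    stands for L_m        (m : int)
   I c    stands for I_{c/2}    (only meaningful for odd c)
   G a    stands for G_{a/2}    (a : int)                               *)

Section Tmod.
Variable R : realType.
Local Notation C := R[i].
Variable V : lmodType C.

Definition subspace (P : V -> Prop) : Prop :=
  P 0 /\ forall (a : C) u v, P u -> P v -> P (a *: u + v).

Definition Z2grading (V0 V1 : V -> Prop) : Prop :=
  [/\ subspace V0, subspace V1,
      (forall v, exists v0 v1, [/\ V0 v0, V1 v1 & v = v0 + v1])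
    & (forall v, V0 v -> V1 v -> v = 0)].

Definition half (k : int) : C := k%:~R / 2.

(* V (with grading V0,V1 and operators L, I, G) is a module over the
   twisted N=2 superconformal algebra T. *)
Definition is_Tmodule (V0 V1 : V -> Prop)
  (L I G : int -> {linear V -> V}) : Prop :=
  [/\ Z2grading V0 V1,
      (forall m v, (V0 v -> V0 (L m v)) /\ (V1 v -> V1 (L m v))),
      (forall c v, odd (absz (c)) -> (V0 v -> V0 (I c v)) /\ (V1 v -> V1 (I c v))),
      (forall a v, (V0 v -> V1 (G a v)) /\ (V1 v -> V0 (G a v))) &
      ((forall (m n : int) v, L m (L n v) - L n (L m v) = (m - n)%:~R *: L (m + n) v) /\
          (forall (m c : int) v, odd (absz (c)) ->
              L m (I c v) - I c (L m v) = - half c *: I (2 * m + c) v) /\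
          (forall (m a : int) v,
              L m (G a v) - G a (L m v) = (half m - half a) *: G (2 * m + a) v) /\
          (forall (c d : int) v, odd (absz (c)) -> odd (absz (d)) ->
              I c (I d v) - I d (I c v) = 0) /\
          (forall (c a : int) v, odd (absz (c)) ->
              I c (G a v) - G a (I c v) = G (c + a) v) /\
          (forall (a b : int) v,
              G a (G b v) + G b (G a v) =
              if ~~ odd (absz (a + b))
              then (exprz (-1) a * 2) *: L (divz (a + b) 2) v
              else (- exprz (-1) a * half (a - b)) *: I (a + b) v))].

Definition pact (T : V -> V) (f : {poly C}) (v : V) : V :=
  \sum_(i < size f) f`_i *: iter i T v.

(* V is free of rank one over U(h), h = C L_0 + C G_0, on the generator one:
   by PBW, U(h) has basis {L_0^k, L_0^k G_0}, so every v is uniquely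
   f(L_0) one + g(L_0) (G_0 one). *)
Definition free_rank1_Uh (L0 G0 : V -> V) (one : V) : Prop :=
  forall v, exists! fg : {poly C} * {poly C},
    v = pact L0 fg.1 one + pact L0 fg.2 (G0 one).

End Tmod.

(* Main.v *)
Require Import Defs.
From HB Require Import structures.
From mathcomp Require Import all_boot all_order all_algebra.
From mathcomp Require Import reals complex.
From mathcomp Require Import ring zify.
Import Order.TTheory GRing.Theory Num.Theory.
Set Implicit Arguments. Unset Strict Implicit. Unset Printing Implicit Defensive.
Local Open Scope ring_scope.


Section Pact.
Variable R : realType.
Local Notation C := R[i].
Variable V : lmodType C.
Implicit Types (T S : {linear V -> V}) (f g : {poly C}) (v w : V).

Lemma pact_pad T f v n : (size f <= n)%N ->
  pact T f v = \sum_(i < n) f`_i *: iter i T v.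
Proof.
move=> hn; rewrite /pact -(subnKC hn) big_split_ord /=.
rewrite [X in _ + X]big1 ?addr0 // => i _.
by rewrite nth_default ?scale0r // leq_addr.
Qed.

Lemma pactD T f g v : pact T (f + g) v = pact T f v + pact T g v.
Proof.
pose n := maxn (size f) (size g).
have hf : (size f <= n)%N by rewrite leq_maxl.
have hg : (size g <= n)%N by rewrite leq_maxr.
have hfg : (size (f + g)%R <= n)%N by apply: leq_trans (size_polyD f g) _.
rewrite (pact_pad _ _ hf) (pact_pad _ _ hg) (pact_pad _ _ hfg) -big_split /=.
by apply: eq_bigr => i _; rewrite coefD scalerDl.
Qed.

Lemma pactZ T a f v : pact T (a *: f) v = a *: pact T f v.
Proof.
rewrite (pact_pad _ _ (size_scale_leq a f)) /pact scaler_sumr.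
by apply: eq_bigr => i _; rewrite coefZ scalerA.
Qed.

Lemma pact0 T v : pact T 0 v = 0.
Proof. by rewrite /pact size_poly0 big_ord0. Qed.

Lemma pactN T f v : pact T (- f) v = - pact T f v.
Proof. by rewrite -(scaleN1r f) pactZ scaleN1r. Qed.

Lemma pactB T f g v : pact T (f - g) v = pact T f v - pact T g v.
Proof. by rewrite pactD pactN. Qed.

Lemma pactC T c v : pact T c%:P v = c *: v.
Proof.
by rewrite (pact_pad _ _ (size_polyC_leq1 c)) big_ord1 coefC.
Qed.

Lemma pact1 T v : pact T 1 v = v.
Proof. by rewrite -[1]/(1%:P) pactC scale1r. Qed.

Lemma pact_mulX T f v : pact T (f * 'X) v = pact T f (T v).
Proof.
have h : (size (f * 'X)%R <= (size f).+1)%N.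
  by rewrite (leq_trans (size_polyMleq _ _)) // size_polyX addn2.
rewrite (pact_pad _ _ h) big_ord_recl coefMX eqxx scale0r add0r /pact.
by apply: eq_bigr => i _; rewrite coefMX /= add0n -iterS iterSr.
Qed.

Lemma pactX T v : pact T 'X v = T v.
Proof. by rewrite -['X]mul1r pact_mulX pact1. Qed.

Lemma pact_comm T S f v : (forall w, S (T w) = T (S w)) ->
  S (pact T f v) = pact T f (S v).
Proof.
move=> hc; rewrite /pact linear_sum; apply: eq_bigr => i _.
rewrite linearZ /=; congr (_ *: _).
by elim: (nat_of_ord i) => [|k IH] //=; rewrite hc IH.
Qed.

Lemma pactM T f g v : pact T (f * g) v = pact T f (pact T g v).
Proof.
elim/poly_ind: f v => [|p c IH] v; first by rewrite mul0r !pact0.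
rewrite mulrDl.
have -> : p * 'X * g = (p * g) * 'X by rewrite -mulrA [('X * g)]mulrC mulrA.
rewrite !pactD !pact_mulX mul_polyC pactZ !pactC IH.
by rewrite -(@pact_comm T T g v (fun w => erefl)).
Qed.

Lemma pact_shift T S s f v : (forall w, S (T w) = T (S w) + s *: S w) ->
  S (pact T f v) = pact T (f \Po ('X + s%:P)) (S v).
Proof.
move=> hS; elim/poly_ind: f v => [|p c IH] v.
  by rewrite comp_poly0 !pact0 linear0.
rewrite comp_poly_MXaddC !pactD !pactC pact_mulX linearD linearZ /= IH hS.
by rewrite pactM pactD pactX pactC.
Qed.

Lemma iter_lin T i a u w :
  iter i T (a *: u + w) = a *: iter i T u + iter i T w.
Proof. by elim: i => [|i IH] //=; rewrite IH linearP. Qed.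

Lemma pact_lin T f a u w :
  pact T f (a *: u + w) = a *: pact T f u + pact T f w.
Proof.
rewrite /pact scaler_sumr -big_split /=; apply: eq_bigr => i _.
by rewrite iter_lin scalerDr !scalerA mulrC.
Qed.

Lemma pact_v0 T f : pact T f 0 = 0.
Proof.
rewrite /pact big1 // => i _.
have -> : iter i T 0 = 0 by elim: (nat_of_ord i) => [|k IH] //=; rewrite IH linear0.
by rewrite scaler0.
Qed.

Lemma pact_scale T f a u : pact T f (a *: u) = a *: pact T f u.
Proof. by move: (pact_lin T f a u 0); rewrite !addr0 pact_v0 addr0. Qed.

Lemma pact_add T f u w : pact T f (u + w) = pact T f u + pact T f w.
Proof. by move: (pact_lin T f 1 u w); rewrite !scale1r. Qed.

Lemma sub_add (P : V -> Prop) u w : subspace P -> P u -> P w -> P (u + w).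
Proof. by move=> [_ h] pu pw; have := h 1 u w pu pw; rewrite scale1r. Qed.

Lemma sub_scale (P : V -> Prop) a u : subspace P -> P u -> P (a *: u).
Proof. by move=> [h0 h] pu; have := h a u 0 pu h0; rewrite addr0. Qed.

Lemma sub_pact (P : V -> Prop) T f v : subspace P -> P v ->
  (forall w, P w -> P (T w)) -> P (pact T f v).
Proof.
move=> sP pv hT; rewrite /pact; apply: big_ind.
- by case: sP.
- by move=> x y; apply: sub_add.
move=> i _; apply: sub_scale => //.
by elim: (nat_of_ord i) => [|k IH] //=; apply: hT.
Qed.

End Pact.


Section Polys.
Variable R : realType.
Local Notation C := R[i].

Lemma periodic_const (f : {poly C}) (s : C) : s != 0 ->
  f \Po ('X + s%:P) = f -> f = (f`_0)%:P.
Proof.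
move=> s0 hf.
set p := f - (f`_0)%:P.
have hp : forall x, p.[x] = f.[x] - f`_0 by move=> x; rewrite /p hornerD hornerN hornerC.
have hx : forall x, f.[x + s] = f.[x].
  by move=> x; rewrite -{2}hf horner_comp hornerD hornerX hornerC.
have hr : forall n : nat, p.[n%:R * s] = 0.
  elim=> [|n IH]; first by rewrite hp mul0r horner_coef0 subrr.
  by rewrite hp mulrSr mulrDl mul1r hx -hp.
apply/eqP; rewrite -subr_eq0; apply/negPn/negP => hp0.
set rs := [seq (i%:R * s) | i <- iota 0 (size p)].
have H1 : all (root p) rs.
  by apply/allP => x /mapP [i _ ->]; apply/rootP; exact: hr.
have H2 : uniq rs.
  rewrite map_inj_uniq ?iota_uniq // => i j /(mulIf s0) /eqP.
  by rewrite eqr_nat => /eqP.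
have := max_poly_roots hp0 H1 H2.
by rewrite size_map size_iota ltnn.
Qed.

Lemma int_case (g k : {poly C}) (b x y : C) : b != 0 ->
  g * 'X + k = (2 * b) *: ('X + x%:P) ->
  (g \Po ('X + y%:P)) * k = (b ^+ 2) *: ('X + (2 * x)%:P) -> g = b%:P.
Proof.
move=> b0 h1 h2.
have hk : k = (2 * b) *: ('X + x%:P) - g * 'X by rewrite -h1 [g * 'X + k]addrC addrK.
set h := g \Po ('X + y%:P) in h2.
have sh : size h = size g by rewrite size_comp_poly2 // size_XaddC.
have rnz : (b ^+ 2) *: ('X + (2 * x)%:P) != 0.
  by rewrite scaler_eq0 negb_or expf_neq0 // -size_poly_eq0 size_XaddC.
have g0 : g != 0.
  by apply/eqP => g0; move: rnz; rewrite -h2 /h g0 comp_poly0 mul0r eqxx.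
have h0 : h != 0 by rewrite -size_poly_eq0 sh size_poly_eq0.
case: (ltngtP (size g) 1%N) => hs.
- by move: hs; rewrite ltnS leqn0 size_poly_eq0 (negbTE g0).
- exfalso.
  have sz2 : (size ((b ^+ 2) *: ('X + (2 * x)%:P))%R <= 2)%N.
    by rewrite (leq_trans (size_scale_leq _ _)) ?size_XaddC.
  have gX0 : g * 'X != 0 by rewrite -size_poly_eq0 size_mulX.
  have s1 : size (h * (g * 'X)) = (2 * size g)%N.
    by rewrite size_mul // size_mulX // sh addnS /= mul2n addnn.
  have s2 : (size (h * ((2 * b) *: ('X + x%:P)))%R < 2 * size g)%N.
    rewrite (leq_ltn_trans (size_polyMleq _ _)) // sh.
    have e2 : size ('X + x%:P) = 2%N by rewrite size_XaddC.
    have := size_scale_leq (2 * b) ('X + x%:P); rewrite e2; move: (size ((2 * b) *: ('X + x%:P) : {poly C})) => z; move: (size g) hs => n; lia.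

  move: sz2; rewrite -h2 hk mulrBr addrC size_polyDl; last by rewrite size_polyN s1.
  rewrite size_polyN s1 => hh; lia.
- have /size_poly1P [c c0 gc] : size g == 1 by rewrite hs.
  move: h2; rewrite /h gc comp_polyC hk gc => /(congr1 (fun q : {poly C} => q`_1)).
  rewrite coefCM coefB coefZ coefCM coefD coefX coefC coefZ coefD coefX coefC /=.
  rewrite addr0 !mulr1 => e.
  have : (c - b) ^+ 2 == 0.
    apply/eqP; have -> : (c - b) ^+ 2 = b ^+ 2 - c * (2 * b - c) by ring.
    by rewrite e subrr.
  by rewrite sqrf_eq0 subr_eq0 => /eqP ->.
Qed.

End Polys.


Section Main.
Variable R : realType.
Local Notation C := R[i].
Variables (V : lmodType C) (V0 V1 : V -> Prop) (L I G : int -> {linear V -> V})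
  (one : V) (lam mu alpha : C).
Hypothesis hT : is_Tmodule V0 V1 L I G.
Hypothesis hfree : free_rank1_Uh (L 0) (G 0) one.
Hypothesis h1 : V0 one.
Hypothesis hlam : lam != 0.
Hypothesis hL : forall (m : int) (f : {poly C}),
      L m (pact (L 0) f one) =
      exprz lam m *: pact (L 0) (('X + (m%:~R * alpha)%:P) * (f \Po ('X + m%:~R%:P))) one.

Local Notation P f := (pact (L 0) f one).
Local Notation Q f := (pact (L 0) f (G 0 one)).
Local Notation hf k := (Defs.half R k).

Lemma two0 : (2 : C) != 0.
Proof. by rewrite pnatr_eq0. Qed.

Lemma half0 : hf 0 = 0 :> C.
Proof. by rewrite /Defs.half mul0r. Qed.

Lemma half2 (m : int) : hf (2 * m) = m%:~R :> C.
Proof. by rewrite /Defs.half intrM [_ * m%:~R]mulrC mulfK ?two0. Qed.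

Lemma oddz2 (n : int) : odd (absz (2 * n)) = false.
Proof. by rewrite abszM oddM. Qed.

Lemma cLG m a v : L m (G a v) = G a (L m v) + (hf m - hf a) *: G (2 * m + a) v.
Proof. by case: hT => _ _ _ _ [_ [_ [h _]]]; rewrite -h addrC subrK. Qed.

Lemma cIG c a v : odd (absz c) -> I c (G a v) = G a (I c v) + G (c + a) v.
Proof. by case: hT => _ _ _ _ [_ [_ [_ [_ [h _]]]]] hc; rewrite -h // addrC subrK. Qed.

Lemma cGG a b v : G a (G b v) + G b (G a v) =
              if ~~ odd (absz (a + b))
              then (exprz (-1) a * 2) *: L (divz (a + b) 2) v
              else (- exprz (-1) a * hf (a - b)) *: I (a + b) v.
Proof. by case: hT => _ _ _ _ [_ [_ [_ [_ [_ h]]]]]. Qed.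

Lemma GL0 a v : G a (L 0 v) = L 0 (G a v) + hf a *: G a v.
Proof.
have := cLG 0 a v; rewrite mulr0 add0r half0 sub0r scaleNr => ->.
by rewrite subrK.
Qed.

Lemma IL0 c v : odd (absz c) -> I c (L 0 v) = L 0 (I c v) + hf c *: I c v.
Proof.
case: hT => _ _ _ _ [_ [h _]] hc.
have := h 0 c v hc; rewrite mulr0 add0r scaleNr => /eqP; rewrite subr_eq => /eqP ->.
by rewrite [RHS]addrC addNKr.
Qed.

Lemma G0L0 v : G 0 (L 0 v) = L 0 (G 0 v).
Proof. by rewrite GL0 half0 scale0r addr0. Qed.

Lemma G0G0 v : G 0 (G 0 v) = L 0 v.
Proof.
have := cGG 0 0 v; rewrite addr0 /= expr0z mul1r div0z.
by rewrite -mulr2n -scaler_nat => /(scalerI two0).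
Qed.

Lemma QP f : Q f = G 0 (P f).
Proof. by rewrite (@pact_comm _ _ (L 0) (G 0) f one G0L0). Qed.

Lemma G0Q f : G 0 (Q f) = P (f * 'X).
Proof. by rewrite (@pact_comm _ _ (L 0) (G 0) f _ G0L0) G0G0 pact_mulX. Qed.

Lemma GP a f v : G a (pact (L 0) f v) = pact (L 0) (f \Po ('X + (hf a)%:P)) (G a v).
Proof. exact: pact_shift (GL0 a). Qed.

Lemma IP c f v : odd (absz c) -> I c (pact (L 0) f v) = pact (L 0) (f \Po ('X + (hf c)%:P)) (I c v).
Proof. by move=> hc; apply: pact_shift => w; apply: IL0. Qed.

Lemma LQ m f : L m (Q f) = G 0 (L m (P f)) + hf m *: G (2 * m) (P f).
Proof. by rewrite QP cLG half0 subr0 addr0. Qed.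

Lemma c1 (q : {poly C}) : 1 \Po q = 1.
Proof. by rewrite -polyC1 comp_polyC. Qed.

Lemma L1 m : L m one = exprz lam m *: P ('X + (m%:~R * alpha)%:P).
Proof. by have := hL m 1; rewrite pact1 c1 mulr1. Qed.

Lemma sub0 : subspace V0. Proof. by case: hT => [[]]. Qed.
Lemma sub1 : subspace V1. Proof. by case: hT => [[]]. Qed.
Lemma disj v : V0 v -> V1 v -> v = 0. Proof. by case: hT => [[_ _ _ h]] _ _ _ _; apply: h. Qed.
Lemma parL m v : (V0 v -> V0 (L m v)) /\ (V1 v -> V1 (L m v)). Proof. by case: hT => _ h _ _ _; apply: h. Qed.
Lemma parG a v : (V0 v -> V1 (G a v)) /\ (V1 v -> V0 (G a v)). Proof. by case: hT => _ _ _ h _; apply: h. Qed.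
Lemma parI c v : odd (absz c) -> (V0 v -> V0 (I c v)) /\ (V1 v -> V1 (I c v)).
Proof. by case: hT => _ _ h _ _; apply: h. Qed.

Lemma V0P f : V0 (P f).
Proof. by apply: sub_pact sub0 h1 _ => w /(parL 0 w).1. Qed.

Lemma V1G0 : V1 (G 0 one). Proof. exact: (parG 0 one).1 h1. Qed.

Lemma V1Q f : V1 (Q f).
Proof. by apply: sub_pact sub1 V1G0 _ => w /(parL 0 w).2. Qed.

Lemma odd_rep v : V1 v -> exists g, v = Q g.
Proof.
move=> hv; have [[f g] [/= e _]] := hfree v.
have hPf : P f = (-1) *: Q g + v by rewrite e scaleN1r addrC addrK.
have : V1 (P f) by rewrite hPf; case: sub1 => _ h; apply: h => //; apply: V1Q.
move/(disj (V0P f)) => P0.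
by exists g; rewrite e P0 add0r.
Qed.

Lemma even_rep v : V0 v -> exists f, v = P f.
Proof.
move=> hv; have [[f g] [/= e _]] := hfree v.
have hQg : Q g = (-1) *: P f + v by rewrite e scaleN1r addKr.
have : V0 (Q g) by rewrite hQg; case: sub0 => _ h; apply: h => //; apply: V0P.
move=> h0; have Q0 := disj h0 (V1Q g).
by exists f; rewrite e Q0 addr0.
Qed.

Lemma uniq_rep f g f' g' : P f + Q g = P f' + Q g' -> f = f' /\ g = g'.
Proof.
move=> e; have [[x y] [_ hu]] := hfree (P f + Q g).
have := hu (f, g) erefl; have := hu (f', g') e.
by move=> -> [-> ->].
Qed.

Lemma P_inj f f' : P f = P f' -> f = f'.
Proof. by move=> e; have := @uniq_rep f 0 f' 0; rewrite !pact0 !addr0 e => /(_ erefl) []. Qed.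

Lemma Q_inj g g' : Q g = Q g' -> g = g'.
Proof. by move=> e; have := @uniq_rep 0 g 0 g'; rewrite !pact0 !add0r e => /(_ erefl) []. Qed.

Lemma G0_scale a b : a *: G 0 one = b *: G 0 one -> a = b.
Proof. by rewrite -!(pactC (L 0)) => /Q_inj /polyC_inj. Qed.


Lemma lam2 (n : int) : exprz lam (2 * n) = exprz lam n ^+ 2.
Proof. by rewrite mulrC -exprz_exp. Qed.

Lemma stepA n : G (2 * n) one = Q (exprz lam n)%:P.
Proof.
have [g hg] := odd_rep ((parG (2 * n) one).1 h1).
have [k hk] := even_rep ((parG (2 * n) (G 0 one)).2 V1G0).
have e1 := cGG 0 (2 * n) one.
rewrite add0r oddz2 /= expr0z mul1r mulKz // in e1.
rewrite hg hk G0Q L1 -pactD scalerA -pactZ in e1.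
have {}e1 := P_inj e1.
have e2 := cGG (2 * n) (2 * n) one.
have h4 : 2 * n + 2 * n = 2 * (2 * n) by lia.
rewrite h4 oddz2 /= mulKz // expN1r -signr_odd oddz2 expr0 mul1r in e2.
rewrite -mulr2n -scaler_nat in e2; have {}e2 := scalerI two0 e2.
rewrite hg GP hk -pactM L1 -pactZ in e2.
have {}e2 := P_inj e2.
rewrite half2 in e2.
have hb : exprz lam n != 0 by rewrite expfz_neq0.
have := int_case hb e1 (y := n%:~R).
by rewrite e2 lam2 intrM mulrA => /(_ erefl) gE; rewrite hg gE.
Qed.

Lemma gconst c : odd (absz c) -> exists gam, G c one = Q gam%:P.
Proof.
move=> hc.
have [g hg] := odd_rep ((parG c one).1 h1).
have e := cLG c c one; rewrite subrr scale0r addr0 in e.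
rewrite hg LQ hL L1 !linearZ /= !GP stepA hg half0 addr0 comp_polyXr half2 -!pactM -!pactZ -pactD in e.
have {}e := Q_inj e.
set gs := g \Po ('X + (c%:~R)%:P) in e.
rewrite comp_polyD comp_polyX comp_polyC -!mul_polyC in e.
have z : (exprz lam c)%:P * (('X + (hf c + c%:~R * alpha)%:P) * (gs - g)) = 0.
  move/eqP: e; rewrite -subr_eq0 => /eqP <-.
  by rewrite polyCD; ring.
have lc0 : (exprz lam c)%:P != 0 by rewrite polyC_eq0 expfz_neq0.
have xd0 : ('X + (hf c + c%:~R * alpha)%:P) != 0 by rewrite -size_poly_eq0 size_XaddC.
move/eqP: z; rewrite !mulf_eq0 (negbTE lc0) (negbTE xd0) /= subr_eq0 => /eqP gsE.
have c0 : c%:~R != 0 :> C by rewrite intr_eq0; apply: contraTneq hc => ->.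
have gE := periodic_const c0 gsE.
by exists g`_0; rewrite hg -gE.
Qed.

Lemma GZ a k v : G a (k *: v) = k *: G a v.
Proof. exact: linearZ. Qed.

Lemma half_neq (m c : int) : m != c -> hf m - hf c != 0.
Proof.
move=> hm; rewrite /Defs.half -mulrBl mulf_eq0 invr_eq0 negb_or two0 andbT.
by rewrite -intrB intr_eq0 subr_eq0.
Qed.

Lemma shiftG c m gam : odd (absz c) -> m != c -> G c one = Q gam%:P ->
  G (2 * m + c) one = Q (exprz lam m * gam)%:P.
Proof.
move=> hc hm hg.
have [g' hg'] := odd_rep ((parG (2 * m + c) one).1 h1).
have e := cLG m c one.
rewrite hg LQ hL L1 !GZ !GP stepA hg hg' half0 addr0 comp_polyXr half2 in e.
rewrite -!pactM -!pactZ -!pactD in e.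
have {}e := Q_inj e.
rewrite !comp_polyC comp_polyD comp_polyX comp_polyC -!mul_polyC in e.
have z : (hf m - hf c)%:P * (g' - (exprz lam m * gam)%:P) = 0.
  move/eqP: e; rewrite eq_sym -subr_eq0 => /eqP <-.
  by rewrite !polyCB (polyCM (exprz lam m) gam); ring.
move/eqP: z; rewrite mulf_eq0 polyC_eq0 (negbTE (half_neq hm)) /= subr_eq0 => /eqP gE.
by rewrite hg' gE.
Qed.

Lemma lin_solve (x y l r k : C) : l = r -> x - y = k * (l - r) -> x = y.
Proof. by move=> ->; rewrite subrr mulr0 => /eqP; rewrite subr_eq0 => /eqP. Qed.

Lemma halfN (c : int) : hf (- c) = - hf c.
Proof. by rewrite /Defs.half intrN mulNr. Qed.

Lemma stepB c : odd (absz c) -> exists gam,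
  [/\ G c one = Q gam%:P,
      G c (G 0 one) = P (- gam *: ('X + (c%:~R * alpha)%:P)),
      I c one = P (- (2 * gam * alpha))%:P
    & gam ^+ 2 = exprz lam c].
Proof.
move=> hc.
have [gam hg] := gconst hc.
have [k hk] := even_rep ((parG c (G 0 one)).2 V1G0).
have [h hh] := even_rep ((parI one hc).1 h1).
have e1 := cGG 0 c one.
rewrite add0r hc /= expr0z sub0r halfN mulN1r opprK in e1.
rewrite hg hk hh G0Q -pactD -pactZ in e1.
have {}e1 := P_inj e1.
have e2 := cGG c c one.
have hcc : c + c = 2 * c by lia.
rewrite hcc oddz2 /= mulKz // expN1r -signr_odd hc expr1 in e2.
rewrite -mulr2n -scaler_nat {1}hg GP comp_polyC hk -pactM L1 scalerA -!pactZ in e2.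
have {}e2 := P_inj e2.
have iG0 : I c (G 0 one) = Q (h + gam%:P).
  by rewrite cIG // hh -QP addr0 hg -pactD.
have h2c : (2 : int) != c by apply: contraTneq hc => <-.
have e3 := cIG (2 * 2) one hc.
rewrite stepA IP // iG0 hh GP stepA half2 (addrC c) (@shiftG c 2 gam hc h2c hg) comp_polyC -!pactM -pactD in e3.
have {}e3 := Q_inj e3.
set hs := h \Po ('X + (2%:~R)%:P) in e3.
have z : (exprz lam 2)%:P * (h - hs) = 0.
  by move/eqP: e3; rewrite -subr_eq0 => /eqP <-; rewrite polyCM; ring.
have l20 : (exprz lam 2)%:P != 0 by rewrite polyC_eq0 expfz_neq0.
move/eqP: z; rewrite mulf_eq0 (negbTE l20) /= subr_eq0 => /eqP hsE.
have t0 : (2%:~R : C) != 0 by rewrite intr_eq0.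
have hE := periodic_const t0 (esym hsE).
set eta := h`_0 in hE.
have kE : k = hf c *: h - gam%:P * 'X by rewrite -e1 [gam%:P * 'X + k]addrC addrK.
rewrite kE hE in e2.
have c1 := congr1 (fun p : {poly C} => p`_1) e2.
have c0 := congr1 (fun p : {poly C} => p`_0) e2.
rewrite /= !coefE /= in c1 c0.
have gsq : gam ^+ 2 = exprz lam c.
  apply: (lin_solve c1 (k := - 2^-1)); by field.
have gam0 : gam != 0.
  by apply/eqP => g0; move: gsq; rewrite g0 expr0n /= => /esym/eqP; rewrite expfz_eq0 (negbTE hlam) andbF.
have c0' : c%:~R != 0 :> C by rewrite intr_eq0; apply: contraTneq hc => ->.
rewrite -gsq in c0.
have etaE : eta = - (2 * gam * alpha).
  apply: (lin_solve c0 (k := (gam * c%:~R)^-1)); rewrite /Defs.half; field.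
  by rewrite c0' gam0.
exists gam; split => //.
- rewrite hk kE hE etaE; congr pact.
  apply/polyP => i; rewrite !coefE; case: i => [|[|i]] /=; rewrite /Defs.half.
  + by field.
  + by ring.
  + by ring.
- by rewrite hh hE etaE.
Qed.

Lemma oddzP c : odd (absz c) -> exists k, c = 2 * k + 1.
Proof.
case: c => n /= hn.
- exists (n./2)%:Z; have := odd_double_half n; rewrite hn -mul2n /= => e; lia.
- exists (- (n./2)%:Z - 1); have := odd_double_half n.
  move: hn; rewrite /= => /negbTE ->; rewrite -mul2n /= add0n NegzE => e; lia.
Qed.

Lemma evenzP a : ~~ odd (absz a) -> exists n, a = 2 * n.
Proof.
case: a => n /= hn.
- exists (n./2)%:Z; have := odd_double_half n; rewrite (negbTE hn) -mul2n /= add0n => e; lia.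
- exists (- (n./2)%:Z - 1); have := odd_double_half n.
  move: hn; rewrite negbK => ->; rewrite -mul2n /= NegzE => e; lia.
Qed.

Hypothesis hmu : mu ^+ 2 = lam.

Lemma mu0 : mu != 0.
Proof. by apply/eqP => m0; move: hlam; rewrite -hmu m0 expr0n /= eqxx. Qed.

Lemma lam_mu (n : int) : exprz lam n = exprz mu (2 * n).
Proof. by rewrite -hmu -exprz_exp. Qed.

Lemma gam_rel c gam gam1 : odd (absz c) -> G c one = Q gam%:P ->
  G 1 one = Q gam1%:P -> gam * mu = gam1 * exprz mu c.
Proof.
move=> hc hg hg1; have [k ck] := oddzP hc.
have hm : - k != c by rewrite ck; apply/eqP; lia.
have := shiftG hc hm hg.
have -> : 2 * - k + c = 1 by rewrite ck; lia.
rewrite hg1 => /Q_inj /polyC_inj ->.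
rewrite lam_mu [_ * gam]mulrC -mulrA -expfzDr ?mu0 //.
have -> : 2 * - k + c = 1 by rewrite ck; lia.
by rewrite expr1z.
Qed.

Lemma gam_eps c gam eps : odd (absz c) -> G c one = Q gam%:P ->
  G 1 one = Q (eps * mu)%:P -> gam = eps * exprz mu c.
Proof.
move=> hc hg hg1; have := gam_rel hc hg hg1.
by rewrite mulrAC => /(mulIf mu0).
Qed.

Lemma allG eps : G 1 one = Q (eps * mu)%:P -> forall a,
  G a one = ((if odd (absz a) then eps else 1) * exprz mu a) *: G 0 one.
Proof.
move=> hg1 a; case: ifP => ha.
- have [gam [hg _ _ _]] := stepB ha.
  by rewrite hg (gam_eps ha hg hg1) pactC.
- have [n ->] := evenzP (negbT ha).
  by rewrite stepA pactC lam_mu mul1r.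
Qed.

Lemma allC eps : G 1 one = Q (eps * mu)%:P -> forall c, odd (absz c) ->
  G c (G 0 one) = - (eps * exprz mu c) *: (L 0 one + (c%:~R * alpha) *: one) /\
  I c one = - (2 * (eps * exprz mu c) * alpha) *: one.
Proof.
move=> hg1 c hc; have [gam [hg hGG hI _]] := stepB hc.
rewrite -(gam_eps hc hg hg1); split.
- by rewrite hGG pactZ pactD pactX pactC.
- by rewrite hI pactC.
Qed.

Lemma final :
  (forall (c a : int), odd (absz (c)) ->
     [/\ G a one = exprz mu a *: G 0 one,
         G c (G 0 one) = - exprz mu c *: (L 0 one + (c%:~R * alpha) *: one)
       & I c one = - (2 * exprz mu c * alpha) *: one])
  \/
  (forall (c a : int), odd (absz (c)) ->
     [/\ G a one = (exprz (-1) a * exprz mu a) *: G 0 one,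
         G c (G 0 one) = exprz mu c *: (L 0 one + (c%:~R * alpha) *: one)
       & I c one = (2 * exprz mu c * alpha) *: one]).
Proof.
have [g1 [hg1 _ _ gsq1]] := @stepB 1 isT.
have : (g1 - mu) * (g1 + mu) = 0 by rewrite -subr_sqr gsq1 hmu expr1z subrr.
move/eqP; rewrite mulf_eq0 => /orP [].
- rewrite subr_eq0 => /eqP e; left => c a hc.
  have hg1' : G 1 one = Q (1 * mu)%:P by rewrite mul1r -e.
  have [h2 h3] := allC hg1' hc.
  split.
  + by rewrite (allG hg1') if_same mul1r.
  + by rewrite h2 mul1r.
  + by rewrite h3 mul1r.
- rewrite addr_eq0 => /eqP e; right => c a hc.
  have hg1' : G 1 one = Q (-1 * mu)%:P by rewrite mulN1r -e.
  have [h2 h3] := allC hg1' hc.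
  split.
  + rewrite (allG hg1') expN1r -signr_odd; congr (_ *: _).
    by case: (odd _); rewrite ?expr1 ?expr0.
  + by rewrite h2 mulN1r opprK.
  + by rewrite h3 mulN1r mulrN mulNr opprK.
Qed.

End Main.

Unset Implicit Arguments. Set Strict Implicit.

Theorem lemma3p2 (R : realType) (V : lmodType R[i]) (V0 V1 : V -> Prop)
  (L I G : int -> {linear V -> V}) (one : V) (lam mu alpha : R[i]) :
  is_Tmodule V0 V1 L I G ->
  free_rank1_Uh (L 0) (G 0) one -> V0 one ->
  lam != 0 -> mu ^+ 2 = lam ->
  (forall (m : int) (f : {poly R[i]}),
      L m (pact (L 0) f one) =
      exprz lam m *: pact (L 0) (('X + (m%:~R * alpha)%:P) * (f \Po ('X + m%:~R%:P))) one) ->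
  (forall (c a : int), odd (absz (c)) ->
     [/\ G a one = exprz mu a *: G 0 one,
         G c (G 0 one) = - exprz mu c *: (L 0 one + (c%:~R * alpha) *: one)
       & I c one = - (2 * exprz mu c * alpha) *: one])
  \/
  (forall (c a : int), odd (absz (c)) ->
     [/\ G a one = (exprz (-1) a * exprz mu a) *: G 0 one,
         G c (G 0 one) = exprz mu c *: (L 0 one + (c%:~R * alpha) *: one)
       & I c one = (2 * exprz mu c * alpha) *: one]).
Proof.
move=> hT hfree h1 hlam hmu hL.
exact: (final hT hfree h1 hlam hL hmu).
Qed.
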